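(* Let $x\cdot y$ be a PA-structure on $(\mathfrak{g},\mathfrak{n})$, where $\mathfrak{g}$ is abelian and $\mathfrak{n}$ is a Heisenberg Lie algebra of dimension $n\ge5$. Then $Z(\mathfrak{n})\cdot\mathfrak{n}=\mathfrak{n}\cdot Z(\mathfrak{n})=0$, and $x\circ y=\frac12(x\cdot y+y\cdot x)$ defines a CPA-structure on $\mathfrak{n}$.
   Context: Let $K$ be a field of characteristic zero and $V$ a finite-dimensional vector space over $K$. Let $\mathfrak{g}=(V,[\,,])$ and $\mathfrak{n}=(V,\{\,,\})$ be two Lie algebra structures on $V$. A post-Lie algebra structure (PA-structure) on the pair $(\mathfrak{g},\mathfrak{n})$ is a $K$-bilinear product $x\cdot y$ on $V$ satisfying, for all $x,y,z\in V$: (i) $x\cdot y-y\cdot x=[x,y]-\{x,y\}$; (ii) $[x,y]\cdot z=x\cdot(y\cdot z)-y\cdot(x\cdot z)$; (iii) $x\cdot\{y,z\}=\{x\cdot y,z\}+\{y,x\cdot z\}$. The Heisenberg Lie algebra of dimension $2m+1$ has a basis $e_1,\dots,e_m,f_1,\dots,f_m,z$ with nonzero brackets $\{e_i,f_i\}=z$ ($1\le i\le m$). $Z(\mathfrak{n})$ is the center. A commutative post-Lie algebra structure (CPA-structure) on $\mathfrak{n}=(V,\{\,,\})$ is a bilinear product $x\circ y$ on $V$ with $x\circ y=y\circ x$, $\{x,y\}\circ z=x\circ(y\circ z)-y\circ(x\circ z)$, and $x\circ\{y,z\}=\{x\circ y,z\}+\{y,x\circ z\}$ for all $x,y,z$.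 *)

(* Defs.v *)
From HB Require Import structures.
From mathcomp Require Import all_boot all_order all_algebra.
Set Implicit Arguments. Unset Strict Implicit. Unset Printing Implicit Defensive.
Import GRing.Theory.
Local Open Scope ring_scope.

Section PostLie.
Variables (K : fieldType) (V : vectType K).

Definition bilinear_prod (p : V -> V -> V) : Prop :=
  (forall (a : K) (x y z : V), p (a *: x + y) z = a *: p x z + p y z) /\
  (forall (a : K) (x y z : V), p x (a *: y + z) = a *: p x y + p x z).

Definition is_lie (br : V -> V -> V) : Prop :=
  [/\ bilinear_prod br,
      (forall x, br x x = 0) &
      (forall x y z, br x (br y z) + br y (br z x) + br z (br x y) = 0)].

Definition is_abelian (br : V -> V -> V) : Prop := forall x y, br x y = 0.

Definition in_center (br : V -> V -> V) (c : V) : Prop := forall y, br c y = 0.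

Definition heisenberg_basis (br : V -> V -> V) (m : nat)
    (e f : 'I_m -> V) (z : V) : Prop :=
  [/\ basis_of fullv ([seq e i | i <- enum (ordinal m)] ++ [seq f i | i <- enum (ordinal m)] ++ [:: z]),
      (forall i j, br (e i) (f j) = if i == j then z else 0),
      (forall i j, br (e i) (e j) = 0),
      (forall i j, br (f i) (f j) = 0) &
      (forall i, br (e i) z = 0 /\ br (f i) z = 0)].

Definition is_heisenberg (br : V -> V -> V) : Prop :=
  is_lie br /\ exists m (e f : 'I_m -> V) (z : V), @heisenberg_basis br m e f z.

Definition is_PA (gbr nbr p : V -> V -> V) : Prop :=
  [/\ bilinear_prod p,
      (forall x y, p x y - p y x = gbr x y - nbr x y),
      (forall x y z, p (gbr x y) z = p x (p y z) - p y (p x z)) &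
      (forall x y z, p x (nbr y z) = nbr (p x y) z + nbr y (p x z))].

Definition is_CPA (nbr c : V -> V -> V) : Prop :=
  [/\ bilinear_prod c,
      (forall x y, c x y = c y x),
      (forall x y z, c (nbr x y) z = c x (c y z) - c y (c x z)) &
      (forall x y z, c x (nbr y z) = nbr (c x y) z + nbr y (c x z))].

End PostLie.

(* Main.v *)
Require Import Defs.
From HB Require Import structures.
From mathcomp Require Import all_boot all_order all_algebra.
From mathcomp Require Import zify.
Set Implicit Arguments. Unset Strict Implicit. Unset Printing Implicit Defensive.
Import GRing.Theory.
Local Open Scope ring_scope.

Section BP.
Context (K : fieldType) (V : vectType K) (p : V -> V -> V) (hp : bilinear_prod p).

Lemma bp0l z : p 0 z = 0.
Proof.
have := hp.1 1 0 0 z; rewrite !scale1r addr0 -[X in X = _]addr0 => h.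
exact: (esym (addrI _ h)).
Qed.
Lemma bp0r z : p z 0 = 0.
Proof.
have := hp.2 1 z 0 0; rewrite !scale1r addr0 -[X in X = _]addr0 => h.
exact: (esym (addrI _ h)).
Qed.
Lemma bpDl x y z : p (x + y) z = p x z + p y z.
Proof. by have := hp.1 1 x y z; rewrite !scale1r. Qed.
Lemma bpDr x y z : p z (x + y) = p z x + p z y.
Proof. by have := hp.2 1 z x y; rewrite !scale1r. Qed.
Lemma bpZl a x z : p (a *: x) z = a *: p x z.
Proof. by have := hp.1 a x 0 z; rewrite !addr0 bp0l addr0. Qed.
Lemma bpZr a x z : p z (a *: x) = a *: p z x.
Proof. by have := hp.2 a z x 0; rewrite !addr0 bp0r addr0. Qed.
Lemma bpNl x z : p (- x) z = - p x z.
Proof. by rewrite -scaleN1r bpZl scaleN1r. Qed.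
Lemma bpNr x z : p z (- x) = - p z x.
Proof. by rewrite -scaleN1r bpZr scaleN1r. Qed.
Lemma bpBl x y z : p (x - y) z = p x z - p y z.
Proof. by rewrite bpDl bpNl. Qed.
Lemma bpBr x y z : p z (x - y) = p z x - p z y.
Proof. by rewrite bpDr bpNr. Qed.
Lemma bp_suml (I : Type) (r : seq I) (P : pred I) (F : I -> V) z :
  p (\sum_(i <- r | P i) F i) z = \sum_(i <- r | P i) p (F i) z.
Proof. exact: (big_morph (fun x => p x z) (fun x y => bpDl x y z) (bp0l z)). Qed.
Lemma bp_sumr (I : Type) (r : seq I) (P : pred I) (F : I -> V) z :
  p z (\sum_(i <- r | P i) F i) = \sum_(i <- r | P i) p z (F i).
Proof. exact: (big_morph (fun x => p z x) (fun x y => bpDr x y z) (bp0r z)). Qed.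
End BP.

Lemma lie_anti (K : fieldType) (V : vectType K) (br : V -> V -> V) :
  is_lie br -> forall x y, br y x = - br x y.
Proof.
case=> hb h0 _ x y; have := h0 (x + y).
rewrite (bpDl hb) !(bpDr hb) !h0 add0r addr0 => /eqP.
by rewrite addrC addr_eq0 => /eqP.
Qed.

Lemma span_decomp (K : fieldType) (V : vectType K) (m : nat) (e : 'I_m -> V) (u : V) :
  u \in <<[seq e i | i <- enum 'I_m]>>%VS -> exists a : 'I_m -> K, u = \sum_i a i *: e i.
Proof.
rewrite span_def big_map big_enum /= => /memv_sumP [vs hvs ->].
have : forall i, exists k, vs i = k *: e i by move=> i; apply/vlineP/hvs.
case/fin_all_exists => a ha; exists a; exact: eq_bigr.
Qed.

Lemma grp3 (K : fieldType) (V : vectType K) (A B C : V) :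
  A + - B + (C + - A) + (B + - C) = 0.
Proof. by rewrite !addrA (addrAC (A - B)) (addrAC A) subrr add0r (addrAC (- B)) addNr add0r subrr. Qed.

Unset Implicit Arguments.

Theorem proposition4p11 (K : fieldType) (V : vectType K)
    (charK : [pchar K] =i pred0)
    (gbr nbr p : V -> V -> V)
    (hg : is_lie gbr) (hgab : is_abelian gbr)
    (hn : is_heisenberg nbr) (hdim : (5 <= \dim (fullv : {vspace V}))%N)
    (hp : is_PA gbr nbr p) :
  (forall c y, in_center nbr c -> p c y = 0 /\ p y c = 0) /\
  is_CPA nbr (fun x y => 2%:R^-1 *: (p x y + p y x)).
Proof.
case: hp => pb p1 p2 p3.
case: hn => nl [m [e [f [z [hbas hef hee hff hz]]]]].
have anti := lie_anti nl.
case: nl => nb n0 _.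
have q1 : forall x y, p y x = p x y + nbr x y.
  move=> x y; have := p1 x y; rewrite hgab sub0r => h.
  by rewrite -[nbr x y]opprK -h opprB addrC subrK.
have q2 : forall x y w, p x (p y w) = p y (p x w).
  by move=> x y w; apply/eqP; rewrite -subr_eq0 -p2 hgab (bp0l pb).
have dec : forall v, exists (a b : 'I_m -> K) (g : K),
    v = \sum_i a i *: e i + \sum_i b i *: f i + g *: z.
  move=> v; have : v \in <<[seq e i | i <- enum 'I_m] ++ [seq f i | i <- enum 'I_m] ++ [:: z]>>%VS.
    by rewrite (span_basis hbas) memvf.
  rewrite !span_cat span_seq1 => /memv_addP [u1 /span_decomp [a ->]
     [w /memv_addP [u2 /span_decomp [b ->] [u3 /vlineP [g ->] ->]]]] ->.
  by exists a, b, g; rewrite addrA.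
have van : forall F : V -> V, (forall k x y, F (k *: x + y) = k *: F x + F y) ->
    (forall i, F (e i) = 0) -> (forall i, F (f i) = 0) -> F z = 0 -> forall v, F v = 0.
  move=> F hF he hf hz0 v.
  have F0 : F 0 = 0.
    have := hF 1 0 0; rewrite !scale1r addr0 -[X in X = _]addr0 => h.
    exact: (esym (addrI _ h)).
  have FD : forall x y, F (x + y) = F x + F y.
    by move=> x y; have := hF 1 x y; rewrite !scale1r.
  have FZ : forall k x, F (k *: x) = k *: F x.
    by move=> k x; have := hF k x 0; rewrite !addr0 F0 addr0.
  have [a [b [g ->]]] := dec v.
  rewrite !FD FZ hz0 scaler0 addr0 !(big_morph F FD F0).
  rewrite big1 ?add0r; last by move=> i _; rewrite FZ he scaler0.
  by rewrite big1 // => i _; rewrite FZ hf scaler0.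
have nbrz : forall x, nbr x z = 0.
  apply: (van); first by move=> k x y; rewrite nb.1.
  - by move=> i; case: (hz i).
  - by move=> i; case: (hz i).
  - exact: n0.
have zbr : forall x, nbr z x = 0 by move=> x; rewrite anti nbrz oppr0.
have K1 : forall a b w, nbr (nbr a b) w = 0.
  move=> a b w; move: a; apply: (van).
  - by move=> k x y; rewrite nb.1 (bpDl nb) (bpZl nb).
  - move=> i; move: b; apply: (van).
    + by move=> k x y; rewrite nb.2 (bpDl nb) (bpZl nb).
    + by move=> j; rewrite hee (bp0l nb).
    + by move=> j; rewrite hef; case: eqP => _; rewrite ?zbr ?(bp0l nb).
    + by case: (hz i) => -> _; rewrite (bp0l nb).
  - move=> i; move: b; apply: (van).
    + by move=> k x y; rewrite nb.2 (bpDl nb) (bpZl nb).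
    + by move=> j; rewrite (anti (e j) (f i)) hef (bpNl nb); case: eqP => _; rewrite ?zbr ?(bp0l nb) oppr0.
    + by move=> j; rewrite hff (bp0l nb).
    + by case: (hz i) => _ ->; rewrite (bp0l nb).
  - by rewrite zbr (bp0l nb).
have KK : forall a b w, nbr w (nbr a b) = 0 by move=> a b w; rewrite anti K1 oppr0.
have hm : (1 < m)%N.
  move: hbas; rewrite basisEfree => /and3P [_ _].
  rewrite !size_cat !size_map -enumT size_enum_ord /= => hle.
  have := leq_trans hdim hle; lia.
have oth : forall i : 'I_m, exists j : 'I_m, i != j.
  move=> i; case: (boolP (nat_of_ord i == 0%N)) => hi.
  - exists (Ordinal hm); apply/eqP => /(f_equal (@nat_of_ord m)) /=.
    by move/eqP: hi => ->.
  - by exists (Ordinal (ltnW hm)); apply/eqP => /(f_equal (@nat_of_ord m)) /= h; rewrite h eqxx in hi.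
have cyc : forall x y w, p x (nbr y w) + p y (nbr w x) + p w (nbr x y) = 0.
  move=> x y w; rewrite !p3 (q1 x y) (q1 y w) (q1 w x) !(bpDr nb) !KK !addr0.
  rewrite (anti (p x y) w) (anti (p w x) y) (anti (p y w) x).
  exact: grp3.
have j0 : 'I_m := Ordinal (ltnW hm).
have pz : forall x, p x z = 0.
  apply: (van).
  - by move=> k x y; rewrite pb.1.
  - move=> i; have [j hij] := oth i; have := cyc (e i) (e j) (f j).
    rewrite hef eqxx (anti (e i) (f j)) hef (negPf hij) oppr0 hee !(bp0r pb) !addr0.
    done.
  - move=> i; have [j hij] := oth i; have := cyc (f i) (e j) (f j).
    rewrite hef eqxx (anti (e j) (f i)) hef eq_sym (negPf hij) oppr0 hff !(bp0r pb) !addr0.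
    done.
  - have := cyc z (e j0) (f j0).
    by rewrite hef eqxx nbrz zbr !(bp0r pb) !addr0.
have zp : forall x, p z x = 0 by move=> x; rewrite q1 pz nbrz addr0.
have cen : forall c, in_center nbr c -> exists g, c = g *: z.
  move=> c hc; have [a [b [g dc]]] := dec c; exists g.
  have z0 : z != 0.
    by apply: (basis_not0 hbas); rewrite !mem_cat mem_seq1 eqxx !orbT.
  have sd : forall (a : 'I_m -> K) j, \sum_i a i *: (if i == j then z else 0) = a j *: z.
    move=> a' j; rewrite (bigD1 j) //= eqxx big1 ?addr0 // => i /negPf ->.
    exact: scaler0.
  have ha : forall j, a j = 0.
    move=> j; have := hc (f j).
    rewrite dc !(bpDl nb) (bpZl nb) zbr scaler0 addr0 !(bp_suml nb).
    under eq_bigr do rewrite (bpZl nb) hef.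
    rewrite sd big1 ?addr0; last by move=> i _; rewrite (bpZl nb) hff scaler0.
    by move/eqP; rewrite scaler_eq0 (negPf z0) orbF => /eqP.
  have hb : forall j, b j = 0.
    move=> j; have := hc (e j).
    rewrite dc !(bpDl nb) (bpZl nb) zbr scaler0 addr0 !(bp_suml nb).
    under [X in _ + X]eq_bigr do rewrite (bpZl nb) anti hef eq_sym scalerN.
    rewrite big1 ?add0r; last by move=> i _; rewrite (bpZl nb) hee scaler0.
    by rewrite sumrN sd => /eqP; rewrite oppr_eq0 scaler_eq0 (negPf z0) orbF => /eqP.
  by rewrite dc !big1 ?add0r // => i _; rewrite ?ha ?hb scale0r.
have part1 : forall c y, in_center nbr c -> p c y = 0 /\ p y c = 0.
  by move=> c y /cen [g ->]; rewrite (bpZl pb) (bpZr pb) zp pz scaler0.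
split=> //.
have two : (2%:R : K) != 0 by move/pcharf0P: charK => ->.
have cE : forall x y, 2%:R^-1 *: (p x y + p y x) = p x y + 2%:R^-1 *: nbr x y.
  move=> x y; rewrite (q1 x y) addrA scalerDr -mulr2n -scaler_nat scalerA mulVf //.
  by rewrite scale1r.
have pc : forall a b y, p (nbr a b) y = 0 by move=> a b y; exact: (part1 _ y (K1 a b)).1.
have pc' : forall a b y, p y (nbr a b) = 0 by move=> a b y; exact: (part1 _ y (K1 a b)).2.
have BB : forall x y w, nbr x (p y w) = nbr y (p x w).
  move=> x y w; have := p3 w x y.
  rewrite pc' (q1 x w) (q1 y w) (bpDl nb) (bpDr nb) K1 KK !addr0 (anti (p x w) y).
  by move/esym/eqP; rewrite addrC addr_eq0 => /eqP.
split.
- split=> k x y w; rewrite !cE.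
  + by rewrite pb.1 nb.1 !scalerDr !scalerA mulrC addrACA.
  + by rewrite pb.2 nb.2 !scalerDr !scalerA mulrC addrACA.
- by move=> x y; rewrite addrC.
- move=> x y w; rewrite !cE pc K1 scaler0 addr0.
  rewrite !(bpDr pb) !(bpZr pb) !(bpDr nb) !(bpZr nb) !KK !pc' !scaler0 !addr0.
  by rewrite q2 BB subrr.
- move=> x y w; rewrite !cE !(bpDl nb) !(bpDr nb) !(bpZl nb) !(bpZr nb) !K1 !KK.
  by rewrite !pc' !scaler0 !addr0 -p3 pc'.
Qed.
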